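(* Let $G=A_\infty$ be the finitary alternating group on a countably infinite set (the group of even permutations moving only finitely many points). Then every element of $G$ is a commutator $xyx^{-1}y^{-1}$ with $x,y\in G$, but for every conjugacy class $C$ of $G$ one has $C^2=\{c_1c_2: c_1,c_2\in C\}\ne G$. *)

(* Defs.v *)
(* The countably infinite set is nat; A_oo is realised as a
   predicate on functions nat -> nat. *)
From mathcomp Require Import all_boot all_fingroup.
Set Implicit Arguments. Unset Strict Implicit. Unset Printing Implicit Defensive.

Definition finperm_of (n : nat) (s : 'S_n) (i : nat) : nat :=
  match insub i : option 'I_n with
  | Some j => val (s j)
  | None => i
  end.

Definition Ainf (f : nat -> nat) : Prop :=
  exists (n : nat) (s : 'S_n), ~~ odd_perm s /\ f =1 finperm_of s.

Definition inv_fun (f g : nat -> nat) : Prop := cancel f g /\ cancel g f.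

Definition is_commutator (c : nat -> nat) : Prop :=
  exists x y xi yi, [/\ Ainf x, Ainf y, inv_fun x xi, inv_fun y yi &
                        c =1 x \o y \o xi \o yi].

Definition conjugate_in_Ainf (g h : nat -> nat) : Prop :=
  exists z zi, [/\ Ainf z, inv_fun z zi & h =1 z \o g \o zi].

(* Main.v *)
Require Import Defs.
From mathcomp Require Import all_boot all_fingroup.
From mathcomp Require Import zify.
Set Implicit Arguments. Unset Strict Implicit. Unset Printing Implicit Defensive.

Section Bridge.
Variable n : nat.
Implicit Types s t : 'S_n.

Lemma fp_lt s i (H : i < n) : finperm_of s i = val (s (Ordinal H)).
Proof. by rewrite /finperm_of insubT. Qed.

Lemma fp_ge s i : n <= i -> finperm_of s i = i.
Proof. by move=> H; rewrite /finperm_of insubN // -leqNgt. Qed.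

Lemma fp_ord s (j : 'I_n) : finperm_of s j = val (s j).
Proof. by rewrite (fp_lt s (ltn_ord j)); congr (val (s _)); apply: val_inj. Qed.

Lemma fp_M s t i : finperm_of (s * t) i = finperm_of t (finperm_of s i).
Proof.
case: (ltnP i n) => H.
  by rewrite (fp_lt _ H) permM (fp_lt s H) fp_ord.
by rewrite !fp_ge.
Qed.

Lemma fp_1 i : finperm_of (1 : 'S_n) i = i.
Proof.
case: (ltnP i n) => H; last by rewrite fp_ge.
by rewrite (fp_lt _ H) perm1.
Qed.

Lemma fp_K s : cancel (finperm_of s) (finperm_of s^-1).
Proof. by move=> i; rewrite -fp_M mulgV fp_1. Qed.

Lemma fp_Kv s : cancel (finperm_of s^-1) (finperm_of s).
Proof. by move=> i; rewrite -fp_M mulVg fp_1. Qed.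

Lemma fp_inv s : inv_fun (finperm_of s) (finperm_of s^-1).
Proof. split; [exact: fp_K | exact: fp_Kv]. Qed.

Lemma fp_Ainf s : ~~ odd_perm s -> Ainf (finperm_of s).
Proof. by move=> H; exists n, s. Qed.

End Bridge.
Section Invol.
Variable T : finType.
Implicit Types s u : {perm T}.

Definition mv s := #|[set z | s z != z]|.

Lemma mv0 s : mv s = 0 -> s = 1%g.
Proof.
move/eqP; rewrite cards_eq0 => /eqP H; apply/permP => z; rewrite perm1.
by apply/eqP; apply/negPn; apply/negP => Hz; move/setP: H => /(_ z); rewrite !inE Hz.
Qed.

Lemma tperm_rem s x : (forall z, s (s z) = z) -> s x != x ->
  let s' := (tperm x (s x) * s)%g in
  [/\ forall z, s' (s' z) = z, s' x = x, s' (s x) = s x,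
      forall z, z != x -> z != s x -> s' z = s z &
      mv s = (mv s').+2].
Proof.
move=> Hs Hx s'.
have E1 : s' x = x by rewrite permM tpermL Hs.
have E2 : s' (s x) = s x by rewrite permM tpermR.
have E3 : forall z, z != x -> z != s x -> s' z = s z.
  by move=> z H1 H2; rewrite permM tpermD // eq_sym.
have Hmv : [set z | s' z != z] = [set z | s z != z] :\ x :\ s x.
  apply/setP => z; rewrite !inE.
  case: (eqVneq z (s x)) => [->|H1]; first by rewrite E2 eqxx.
  case: (eqVneq z x) => [->|H2]; first by rewrite E1 eqxx.
  by rewrite E3.
split => //.
- move=> z.
  case: (eqVneq z (s x)) => [->|H1]; first by rewrite !E2.
  case: (eqVneq z x) => [->|H2]; first by rewrite !E1.
  rewrite E3 // E3 ?Hs //.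
    by apply: contra H1 => /eqP <-; rewrite Hs.
  by apply: contra H2 => /eqP /(congr1 s); rewrite !Hs => ->.
- rewrite /mv Hmv (cardsD1 (s x) [set z | s z != z]) (cardsD1 x ([set z | s z != z] :\ s x)).
  rewrite !inE Hs eq_sym Hx /= setDDl setUC -setDDl.
  by rewrite add1n add1n.
Qed.

Lemma invol_parity s : (forall z, s (s z) = z) ->
  ~~ odd (mv s) /\ odd_perm s = odd (mv s)./2.
Proof.
have [k] := ubnP (mv s); elim: k s => // k IH s Hk Hs.
case: (eqVneq (mv s) 0) => [E|H0].
  by rewrite E (mv0 E) odd_perm1.
have [x Hx] : exists x, s x != x.
  move: H0; rewrite /mv cards_eq0 => /set0Pn [x]; rewrite inE => Hx; by exists x.
have [H1 _ _ _ H5] := tperm_rem Hs Hx.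
set s' := (tperm x (s x) * s)%g in H1 H5.
have Hlt : mv s' < k by move: Hk; rewrite H5; lia.
have [IH1 IH2] := IH s' Hlt H1.
have Es : odd_perm s = odd_perm (tperm x (s x) * s')%g.
  by rewrite /s' mulgA tperm2 mul1g.
rewrite Es odd_mul_tperm IH2 H5 /= IH1 eq_sym Hx /=.
by case: (odd _) IH1.
Qed.

Lemma comm_tperm u a b : u a = a -> u b = b ->
  forall z, u (tperm a b z) = tperm a b (u z).
Proof.
move=> Ha Hb z; case: (tpermP a b z) => [->|->|Hza Hzb].
- by rewrite Ha tpermL.
- by rewrite Hb tpermR.
rewrite tpermD //; apply/eqP => E.
  by apply: Hza; apply: (perm_inj (s:=u)); rewrite Ha E.
by apply: Hzb; apply: (perm_inj (s:=u)); rewrite Hb E.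
Qed.

Lemma tperm_conj (f : T -> T) x x' : injective f ->
  forall z, tperm (f x) (f x') (f z) = f (tperm x x' z).
Proof.
move=> Hf z; case: (tpermP x x' z) => [->|->|H1 H2]; rewrite ?tpermL ?tpermR //.
by rewrite tpermD // (inj_eq Hf); apply/eqP => E; [apply: H1 | apply: H2].
Qed.

Lemma invol_conj s u : (forall z, s (s z) = z) -> (forall z, u (u z) = z) ->
  mv s = mv u -> exists p : {perm T}, forall z, u (p z) = p (s z).
Proof.
have [k] := ubnP (mv s); elim: k s u => // k IH s u Hk Hs Hu Hm.
case: (eqVneq (mv s) 0) => [E|H0].
  have Hs1 := mv0 E; have Hu1 : u = 1%g by apply: mv0; rewrite -Hm.
  by exists 1%g => z; rewrite Hs1 Hu1 !perm1.
have [x Hx] : exists x, s x != x.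
  move: H0; rewrite /mv cards_eq0 => /set0Pn [x]; rewrite inE => Hx; by exists x.
have [y Hy] : exists y, u y != y.
  move: H0; rewrite Hm /mv cards_eq0 => /set0Pn [y]; rewrite inE => Hy; by exists y.
have [S1 S2 S3 _ S5] := tperm_rem Hs Hx.
have [U1 U2 U3 _ U5] := tperm_rem Hu Hy.
set s' := (tperm x (s x) * s)%g in S1 S2 S3 S5.
set u' := (tperm y (u y) * u)%g in U1 U2 U3 U5.
have Hlt : mv s' < k by move: Hk; rewrite S5; lia.
have Hm' : mv s' = mv u' by apply/eq_add_S/eq_add_S; rewrite -S5 -U5.
have [p0 Hp0] := IH s' u' Hlt S1 U1 Hm'.
set a := p0 x; set b := p0 (s x).
have Ha : u' a = a by rewrite /a Hp0 S2.
have Hb : u' b = b by rewrite /b Hp0 S3.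
have Hab : a != b by rewrite /a /b (inj_eq perm_inj) eq_sym.
set w := tperm a y b.
have Hw : u' w = w by rewrite /w comm_tperm // Hb.
have Hwy : w != y.
  rewrite /w; case: (tpermP a y b) => [E|E|_ H2].
  - by rewrite E eqxx in Hab.
  - by rewrite -E.
  - by apply/eqP.
exists (p0 * tperm a y * tperm w (u y))%g => z.
have Hq : forall v, u' (tperm w (u y) (tperm a y v)) = tperm w (u y) (tperm a y (u' v)).
  by move=> v; rewrite comm_tperm // comm_tperm.
have Hux : forall v, u v = u' (tperm y (u y) v).
  by move=> v; rewrite /u' permM tpermK.
have Hsx : forall v, s v = s' (tperm x (s x) v).
  by move=> v; rewrite /s' permM tpermK.
rewrite !permM Hsx -Hp0 -Hq Hux.
congr (u' _).
have Hf : injective (fun v => tperm w (u y) (tperm a y (p0 v))).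
  by move=> v1 v2 /perm_inj /perm_inj /perm_inj.
have Fx : tperm w (u y) (tperm a y (p0 x)) = y.
  rewrite -/a tpermL tpermD //; by rewrite eq_sym.
have Fs : tperm w (u y) (tperm a y (p0 (s x))) = u y.
  by rewrite -/b -/w tpermL.
by have := tperm_conj x (s x) Hf z; rewrite /= Fx Fs => ->.
Qed.
End Invol.
Lemma modA1 a L i : i < L -> (a + L - (a + L - i) %% L) %% L = i.
Proof.
move=> Hi.
have Hm := divn_eq (a + L - i) L.
set q := (a + L - i) %/ L in Hm; set j := (a + L - i) %% L in Hm *.
have Hj : j < L by rewrite ltn_mod; lia.
have -> : a + L - j = q * L + i by lia.
by rewrite modnMDl modn_small.
Qed.

Lemma modA2 a L i : i < L -> (a.+1 + L - (a + L - i) %% L) %% L = i.+1 %% L.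
Proof.
move=> Hi.
have Hm := divn_eq (a + L - i) L.
set q := (a + L - i) %/ L in Hm; set j := (a + L - i) %% L in Hm *.
have Hj : j < L by rewrite ltn_mod; lia.
have -> : a.+1 + L - j = q * L + i.+1 by lia.
by rewrite modnMDl.
Qed.

Lemma modchar a L i : a <= 2 -> 2 <= L -> i < L ->
  ((a + L - i) %% L = i) <-> (a + L = i.*2 \/ a = i.*2 \/ a = i.*2 + L).
Proof.
move=> Ha HL Hi.
have Hm := divn_eq (a + L - i) L.
set q := (a + L - i) %/ L in Hm; set j := (a + L - i) %% L in Hm *.
have Hj : j < L by rewrite ltn_mod; lia.
have Hq : q <= 2.
  rewrite -(@leq_pmul2r L); last lia.
  lia.
case: q Hm Hq => [|[|[|q]]] Hm Hq //; rewrite ?mul0n ?mul1n in Hm.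
- by split; lia.
- by split; lia.
- by split; lia.
Qed.

Lemma cnt_one (P : pred nat) L j : j < L -> (forall i, i < L -> P i = (i == j)) ->
  count P (iota 0 L) = 1.
Proof.
move=> Hj H.
rewrite (@eq_in_count _ _ (pred1 j)); last by move=> i; rewrite mem_iota => /andP[_ Hi]; rewrite H.
by rewrite count_uniq_mem ?iota_uniq // mem_iota Hj.
Qed.

Lemma cnt_two (P : pred nat) L j1 j2 : j1 < L -> j2 < L -> j1 != j2 ->
  (forall i, i < L -> P i = (i == j1) || (i == j2)) ->
  count P (iota 0 L) = 2.
Proof.
move=> Hj1 Hj2 Hne H.
rewrite (@eq_in_count _ _ (predU (pred1 j1) (pred1 j2))); last first.
  by move=> i; rewrite mem_iota => /andP[_ Hi]; rewrite H.
have := count_predUI (pred1 j1) (pred1 j2) (iota 0 L).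
rewrite (@eq_count _ (predI (pred1 j1) (pred1 j2)) pred0); last first.
  move=> i /=; apply/andP => -[/eqP -> /eqP E]; by rewrite E eqxx in Hne.
by rewrite count_pred0 !count_uniq_mem ?iota_uniq // !mem_iota Hj1 Hj2 addn0 => ->.
Qed.

Lemma cnt_zero (P : pred nat) L : (forall i, i < L -> ~~ P i) ->
  count P (iota 0 L) = 0.
Proof.
move=> H; apply/eqP; rewrite -leqn0 leqNgt -has_count; apply/hasP => -[i].
by rewrite mem_iota => /andP[_ Hi]; apply/negP/H.
Qed.

Definition cnt L a := count (fun i => (a + L - i) %% L == i) (iota 0 L).

Lemma cnt_odd L a : a <= 2 -> 3 <= L -> odd L -> cnt L a = 1.
Proof.
move=> Ha HL Ho.
have [k Hk] : exists k, L = k.*2.+1.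
  by exists L./2; rewrite -{1}(odd_double_half L) Ho.
rewrite /cnt.
case: a Ha => [|[|[|a]]] Ha //.
- apply: (cnt_one (j := 0)); first lia.
  move=> i Hi; apply/eqP/eqP; rewrite (modchar _ _ Hi) //; try lia.
- apply: (cnt_one (j := k.+1)); first lia.
  move=> i Hi; apply/eqP/eqP; rewrite (modchar _ _ Hi) //; try lia.
- apply: (cnt_one (j := 1)); first lia.
  move=> i Hi; apply/eqP/eqP; rewrite (modchar _ _ Hi) //; try lia.
Qed.

Lemma cnt_even L : 2 <= L -> ~~ odd L ->
  [/\ cnt L 0 = 2, cnt L 1 = 0 & cnt L 2 = 2].
Proof.
move=> HL Ho.
have [k Hk] : exists k, L = k.*2.
  by exists L./2; rewrite -{1}(odd_double_half L) (negbTE Ho).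
rewrite /cnt; split.
  apply: (cnt_two (j1 := 0) (j2 := k)); try lia; move=> i Hi; apply/eqP/idP; rewrite (modchar _ _ Hi) //; lia.
  apply: (@cnt_zero (fun i => (1 + L - i) %% L == i)) => i Hi; apply/eqP; rewrite (modchar _ _ Hi) //; lia.
case: (ltnP k 2) => Hk1.
  apply: (cnt_two (j1 := 0) (j2 := 1)); try lia; move=> i Hi; apply/eqP/idP; rewrite (modchar _ _ Hi) //; lia.
apply: (cnt_two (j1 := 1) (j2 := k.+1)); try lia; move=> i Hi; apply/eqP/idP; rewrite (modchar _ _ Hi) //; lia.
Qed.
Section Factor.
Variable T : finType.

Lemma traject_iota (f : T -> T) x n :
  traject f x n = map (fun i => iter i f x) (iota 0 n).
Proof.
elim: n => // n IH.
by rewrite trajectSr IH -addn1 iotaD map_cat /= add0n cats1.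
Qed.

Lemma factor (g : {perm T}) : exists s u : {perm T},
  [/\ forall z, s (s z) = z, forall z, u (u z) = z,
      forall z, g z = u (s z),
      forall z, g z = z -> s z = z /\ u z = z &
      mv s <= mv u + 2 /\ mv u <= mv s + 2].
Proof.
have [k] := ubnP (mv g); elim: k g => // k IH g Hk.
case: (eqVneq (mv g) 0) => [E|H0].
  exists 1%g, 1%g; rewrite (mv0 E); split => [z|z|z|z _|]; rewrite ?perm1 //.
  by rewrite leq_addr.
have [x Hx] : exists x, g x != x.
  move: H0; rewrite /mv cards_eq0 => /set0Pn [x]; rewrite inE => Hx; by exists x.
set O := porbit g x.
set L := #|O|.
have HOt : O =i traject g x L := porbit_traject g x.
have Hu : uniq (traject g x L) := uniq_traject_porbit g x.
have HL : iter L g x = x := iter_porbit g x.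
have HiterO : forall j, iter j g x \in O by move=> j; rewrite -permX mem_porbit.
have HO : forall z, (g z \in O) = (z \in O).
  move=> z; rewrite /O -!eq_porbit_mem.
  by have := porbit_perm g 1 z; rewrite expg1 => ->.
have HL2 : 2 <= L.
  have H1 := card_porbit_neq0 g x; rewrite -/O -/L in H1.
  case: (leqP 2 L) => // H2.
  have EL : L = 1 by lia.
  by move: HL; rewrite EL /= => E; rewrite E eqxx in Hx.
have HL0 : 0 < L by apply: leq_trans HL2.
have Hiter_mod : forall j, iter j g x = iter (j %% L) g x.
  move=> j; rewrite {1}(divn_eq j L) addnC iterD; congr (iter _ g _).
  elim: (j %/ L) => [|q IHq]; first by rewrite mul0n.
  by rewrite mulSn iterD IHq HL.
pose idx z := index z (traject g x L).
have Hidx : forall z, z \in O -> idx z < L /\ iter (idx z) g x = z.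
  move=> z; rewrite HOt => Hz.
  have Hi : idx z < L by rewrite -[X in _ < X](size_traject g x L) index_mem.
  by split => //; rewrite -(nth_traject g Hi x) nth_index.
have Hidx2 : forall i, i < L -> idx (iter i g x) = i.
  by move=> i Hi; rewrite /idx -(nth_traject g Hi x) index_uniq // size_traject.
have Hinj : forall i j, i < L -> j < L -> (iter i g x == iter j g x) = (i == j).
  move=> i j Hi Hj; rewrite -(nth_traject g Hi x) -(nth_traject g Hj x).
  by rewrite nth_uniq ?size_traject.
pose gf z := if z \in O then z else g z.
have gf_inj : injective gf.
  move=> z1 z2; rewrite /gf; case: ifP => H1; case: ifP => H2 // E.
  - by move: H2; rewrite -HO -E H1.
  - by move: H1; rewrite -HO E H2.
  - exact: perm_inj E.
pose g' := perm gf_inj.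
have Hg'O : forall z, z \in O -> g' z = z by move=> z Hz; rewrite permE /gf Hz.
have Hg'N : forall z, z \notin O -> g' z = g z.
  by move=> z Hz; rewrite permE /gf (negbTE Hz).
have Hlt : mv g' < k.
  rewrite -ltnS (leq_trans _ Hk) // ltnS /mv proper_card //.
  apply/properP; split.
    apply/subsetP => z; rewrite !inE.
    case: (boolP (z \in O)) => Hz; first by rewrite Hg'O ?eqxx.
    by rewrite Hg'N.
  by exists x; rewrite !inE ?Hx // Hg'O ?eqxx // porbit_id.
have [s' [u' [Hs' Hu' Hg' Hfix' [Hm1 Hm2]]]] := IH g' Hlt.
have Hs'O : forall z, z \in O -> s' z = z by move=> z Hz; case: (Hfix' z (Hg'O z Hz)).
have Hu'O : forall z, z \in O -> u' z = z by move=> z Hz; case: (Hfix' z (Hg'O z Hz)).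
have Hs'N : forall z, z \notin O -> s' z \notin O.
  move=> z Hz; apply/negP => H; have := Hs'O _ H; rewrite Hs' => E.
  by rewrite E H in Hz.
have Hu'N : forall z, z \notin O -> u' z \notin O.
  move=> z Hz; apply/negP => H; have := Hu'O _ H; rewrite Hu' => E.
  by rewrite E H in Hz.
pose a := if mv u' <= mv s' then 0 else 1.
pose R b z := iter ((b + L - idx z) %% L) g x.
have HRO : forall b z, R b z \in O by move=> b z; apply: HiterO.
have HRR : forall b z, z \in O -> R b (R b z) = z.
  move=> b z Hz; have [Hi Hz'] := Hidx z Hz.
  by rewrite /R Hidx2 ?ltn_pmod // modA1.
have HRg : forall b z, z \in O -> R b.+1 (R b z) = g z.
  move=> b z Hz; have [Hi Hz'] := Hidx z Hz.
  by rewrite /R Hidx2 ?ltn_pmod // modA2 // -Hiter_mod iterS Hz'.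
pose sf z := if z \in O then R a z else s' z.
pose uf z := if z \in O then R a.+1 z else u' z.
have sf_inv : involutive sf.
  move=> z; rewrite /sf; case: (boolP (z \in O)) => Hz; first by rewrite HRO HRR.
  by rewrite (negbTE (Hs'N z Hz)) Hs'.
have uf_inv : involutive uf.
  move=> z; rewrite /uf; case: (boolP (z \in O)) => Hz; first by rewrite HRO HRR.
  by rewrite (negbTE (Hu'N z Hz)) Hu'.
pose s := perm (can_inj sf_inv).
pose u := perm (can_inj uf_inv).
have Hcount : forall (t t' : {perm T}) b, (forall z, t z = if z \in O then R b z else t' z) ->
    (forall z, z \in O -> t' z = z) -> mv t + cnt L b = mv t' + L.
  move=> t t' b Ht Ht'.
  rewrite /mv -(cardsID O [set z | t z != z]).
  have -> : [set z | t z != z] :\: O = [set z | t' z != z].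
    apply/setP => z; rewrite !inE Ht.
    by case: (boolP (z \in O)) => Hz //=; rewrite Ht' ?eqxx.
  suff : #|[set z | t z != z] :&: O| + cnt L b = L by lia.
  have -> : [set z | t z != z] :&: O = [set z in filter (fun z => R b z != z) (traject g x L)].
    apply/setP => z; rewrite !inE mem_filter -HOt Ht.
    by case: (boolP (z \in O)) => Hz; rewrite ?andbF ?andbT.
  rewrite cardsE (card_uniqP _) ?filter_uniq // size_filter.
  rewrite traject_iota count_map.
  rewrite (@eq_in_count _ _ (predC (fun i => (b + L - i) %% L == i))); last first.
    move=> i; rewrite mem_iota add0n => /andP[_ Hi] /=.
    by rewrite /R Hidx2 // Hinj // ltn_pmod.
  by rewrite addnC /cnt count_predC size_iota.
have Ms := Hcount s s' a (fun z => permE _ _) Hs'O.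
have Mu := Hcount u u' a.+1 (fun z => permE _ _) Hu'O.
exists s, u; split.
- by move=> z; rewrite !permE; apply: sf_inv.
- by move=> z; rewrite !permE; apply: uf_inv.
- move=> z; rewrite !permE /sf /uf; case: (boolP (z \in O)) => Hz; first by rewrite HRO HRg.
  by rewrite (negbTE (Hs'N z Hz)) -Hg' Hg'N.
- move=> z Hz.
  have HzO : z \notin O.
    apply/negP; rewrite /O porbit_sym => /porbitP [i Ei].
    have Exz : x = z by rewrite Ei permX_fix.
    by move: Hx; rewrite Exz Hz eqxx.
  by rewrite !permE /sf /uf (negbTE HzO); apply: Hfix'; rewrite Hg'N.
- case: (boolP (odd L)) => Ho.
    have HL3 : 3 <= L.
      rewrite ltn_neqAle HL2 andbT; apply/eqP => E; by rewrite -E in Ho.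
    rewrite !cnt_odd // in Ms Mu; try (by rewrite /a; case: ifP).
    lia.
  have [C0 C1 C2] := cnt_even HL2 Ho.
  move: Ms Mu; rewrite /a; case: ifP => Ha; rewrite ?C0 ?C1 ?C2 => Ms Mu; lia.
Qed.
End Factor.
Lemma fp_lift n (s : 'S_n) :
  finperm_of (lift_perm (ord_max : 'I_n.+1) ord_max s) =1 finperm_of s.
Proof.
move=> i; case: (ltngtP i n) => H.
- have Hi' : i < n.+1 by lia.
  rewrite (fp_lt _ Hi') (fp_lt _ H).
  have -> : Ordinal Hi' = lift ord_max (Ordinal H).
    by apply: val_inj; rewrite /= /bump leqNgt H.
  by rewrite lift_perm_lift /= /bump leqNgt ltn_ord.
- by rewrite !fp_ge //; lia.
- have Hi' : i < n.+1 by lia.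
  rewrite (fp_lt _ Hi') fp_ge; last lia.
  have -> : Ordinal Hi' = ord_max by apply: val_inj; rewrite /= H.
  by rewrite lift_perm_id /= H.
Qed.

Lemma odd_lift n (s : 'S_n) :
  odd_perm (lift_perm (ord_max : 'I_n.+1) ord_max s) = odd_perm s.
Proof. by rewrite odd_lift_perm addbb. Qed.

Definition lift4 n (s : 'S_n) : 'S_(n.+4) :=
  lift_perm ord_max ord_max (lift_perm ord_max ord_max
    (lift_perm ord_max ord_max (lift_perm ord_max ord_max s))).

Lemma fp_lift4 n (s : 'S_n) : finperm_of (lift4 s) =1 finperm_of s.
Proof. by move=> i; rewrite /lift4 !fp_lift. Qed.

Lemma odd_lift4 n (s : 'S_n) : odd_perm (lift4 s) = odd_perm s.
Proof. by rewrite /lift4 !odd_lift. Qed.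

Lemma part1 g : Ainf g -> is_commutator g.
Proof.
move=> [n [s [Hs Hg]]].
pose G := lift4 s.
have HG : forall i, g i = finperm_of G i by move=> i; rewrite Hg fp_lift4.
have HGe : ~~ odd_perm G by rewrite odd_lift4.
pose e (j : nat) : 'I_(n.+4) := inord (n + j).
have He : forall j, j < 4 -> (e j : nat) = n + j by move=> j Hj; rewrite inordK //; lia.
have HGfix : forall j, j < 4 -> G (e j) = e j.
  move=> j Hj; apply: val_inj => /=.
  rewrite -(fp_ord G (e j)) fp_lift4 fp_ge // He //; lia.
have [s0 [u0 [Hs0 Hu0 HGsu Hfix [Hm1 Hm2]]]] := factor G.
have Hne : forall j1 j2, j1 < 4 -> j2 < 4 -> j1 != j2 -> e j1 != e j2.
  move=> j1 j2 H1 H2 H; apply/negP => /eqP /(congr1 (@nat_of_ord _)); rewrite !He //; lia.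
have [s1 [u1 [Hs1 Hu1 HGsu1 Hm [Hodd Hf2 Hf3]]]] : exists s1 u1 : 'S_(n.+4),
    [/\ forall z, s1 (s1 z) = z, forall z, u1 (u1 z) = z,
        forall z, G z = u1 (s1 z), mv s1 = mv u1 &
        [/\ ~~ odd_perm s1,
        s1 (e 2) = e 2 /\ u1 (e 2) = e 2 & s1 (e 3) = e 3 /\ u1 (e 3) = e 3]].
  have [Ps0 Qs0] := invol_parity Hs0.
  have [Pu0 Qu0] := invol_parity Hu0.
  have Hpar : odd_perm s0 = odd_perm u0.
    have : G = (s0 * u0)%g by apply/permP => z; rewrite permM HGsu.
    move=> EG; move: HGe; rewrite EG odd_permM.
    by case: (odd_perm s0); case: (odd_perm u0).
  have Hmv : mv s0 = mv u0.
    rewrite Qs0 Qu0 in Hpar.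
    have E1 := odd_double_half (mv s0); have E2 := odd_double_half (mv u0).
    rewrite (negbTE Ps0) (negbTE Pu0) /= !add0n in E1 E2.
    move: Hm1 Hm2; rewrite -E1 -E2.
    set a := (mv s0)./2; set b := (mv u0)./2 => Hm1 Hm2.
    rewrite -/a -/b in Hpar.
    case: (ltngtP a b) => H; last by rewrite H.
    + have Eb : b = a.+1 by lia.
      by rewrite Eb /= in Hpar; case: (odd a) Hpar.
    + have Ea : a = b.+1 by lia.
      by rewrite Ea /= in Hpar; case: (odd b) Hpar.
  have F := fun j Hj => Hfix (e j) (HGfix j Hj).
  case: (boolP (odd_perm s0)) => Ho; last first.
    exists s0, u0; split => //; split => //.
      by split; [case: (F 2 isT) | case: (F 2 isT)].
    by split; [case: (F 3 isT) | case: (F 3 isT)].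
  pose t := tperm (e 0) (e 1).
  have Cs : forall z, s0 (t z) = t (s0 z).
    by apply: comm_tperm; [case: (F 0 isT) | case: (F 1 isT)].
  have Cu : forall z, u0 (t z) = t (u0 z).
    by apply: comm_tperm; [case: (F 0 isT) | case: (F 1 isT)].
  have Hne01 : e 0 != e 1 by apply: Hne.
  have Mt : forall w : 'S_(n.+4), (forall z, w (w z) = z) -> w (e 0) = e 0 ->
      w (e 1) = e 1 -> mv (t * w)%g = (mv w).+2.
    move=> w Hw W0 W1.
    have Hw' : forall z, (t * w)%g ((t * w)%g z) = z.
      move=> z; rewrite !permM comm_tperm // Hw tpermK //.
    have Hx : (t * w)%g (e 0) != e 0 by rewrite permM tpermL W1 eq_sym.
    have [_ _ _ _ M5] := tperm_rem Hw' Hx.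
    rewrite M5; congr (mv _).+2.
    apply/permP => z; rewrite !permM tpermL W1 -/t tpermK.
    done.
  exists (t * s0)%g, (t * u0)%g; split.
  - by move=> z; rewrite !permM Cs Hs0 tpermK.
  - by move=> z; rewrite !permM Cu Hu0 tpermK.
  - by move=> z; rewrite !permM Cs tpermK HGsu.
  - by rewrite !Mt // ?Hmv //; [case: (F 0 isT) | case: (F 1 isT) | case: (F 0 isT) | case: (F 1 isT)].
  split.
  - by rewrite odd_mul_tperm Hne01 Ho.
  - by rewrite !permM tpermD ?Hne //; case: (F 2 isT) => -> ->.
  - by rewrite !permM tpermD ?Hne //; case: (F 3 isT) => -> ->.
have [p0 Hp0] := invol_conj Hs1 Hu1 Hm.
have [p [Hp Hpe]] : exists p : 'S_(n.+4), (forall z, u1 (p z) = p (s1 z)) /\ ~~ odd_perm p.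
  case: (boolP (odd_perm p0)) => Ho; last by exists p0.
  exists (p0 * tperm (e 2) (e 3))%g; split.
    move=> z; rewrite !permM comm_tperm ?Hp0 //; by [case: Hf2 | case: Hf3].
  by rewrite odd_permM odd_tperm Hne // Ho.
exists (finperm_of p), (finperm_of s1), (finperm_of p^-1%g), (finperm_of s1^-1%g).
split.
- exact: fp_Ainf Hpe.
- exact: fp_Ainf Hodd.
- exact: fp_inv.
- exact: fp_inv.
move=> i /=; rewrite HG -!fp_M; congr (finperm_of _ i).
apply/permP => z; rewrite !permM.
have -> : (s1^-1)%g z = s1 z by apply: (perm_inj (s := s1)); rewrite permKV Hs1.
by rewrite -Hp permKV HGsu1.
Qed.

Lemma conj_moved n (s : 'S_n) g c : g =1 finperm_of s -> conjugate_in_Ainf g c ->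
  exists z : nat -> nat, forall x, c x != x -> x \in map z (iota 0 n).
Proof.
move=> Hg [z [zi [_ [K1 K2] Hc]]]; exists z => x; apply: contraR => Hx.
rewrite Hc /= Hg fp_ge ?K2 //.
rewrite leqNgt; apply: contra Hx => H.
by apply/mapP; exists (zi x); rewrite ?mem_iota ?K2.
Qed.

Lemma part2 g : Ainf g ->
     exists w, Ainf w /\
       ~ (exists c1 c2, conjugate_in_Ainf g c1 /\ conjugate_in_Ainf g c2 /\
                        w =1 c1 \o c2).
Proof.
move=> [n [s [_ Hg]]].
pose m := (n.*2).+3.
pose sh : 'S_m := perm (@ordS_inj m).
exists (finperm_of (sh * sh)); split.
  by apply: fp_Ainf; rewrite odd_permM addbb.
have Hw : forall j, j < m -> finperm_of (sh * sh) j != j.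
  move=> j Hj; rewrite (fp_lt _ Hj) permM !permE /=.
  have Hm : 2 < m by rewrite /m.
  case: (ltnP j.+1 m) => H1.
    rewrite (modn_small H1).
    case: (ltnP j.+2 m) => H2; first by rewrite modn_small //; lia.
    have -> : j.+2 = m by lia.
    by rewrite modnn; lia.
  have -> : j.+1 = m by lia.
  by rewrite modnn modn_small //; lia.
move=> [c1 [c2 [H1 [H2 Hwc]]]].
have [z1 Hz1] := conj_moved Hg H1.
have [z2 Hz2] := conj_moved Hg H2.
have Hsub : {subset iota 0 m <= map z1 (iota 0 n) ++ map z2 (iota 0 n)}.
  move=> j; rewrite mem_iota add0n => /Hw; rewrite Hwc /= mem_cat => Hj.
  case: (eqVneq (c2 j) j) => E.
    by rewrite E in Hj; rewrite Hz1.
  by rewrite Hz2 ?orbT.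
have := uniq_leq_size (iota_uniq 0 m) Hsub.
rewrite size_cat !size_map !size_iota /m; lia.
Qed.

Theorem mainTheorem4 :
  (forall g, Ainf g -> is_commutator g) /\
  (forall g, Ainf g ->
     exists w, Ainf w /\
       ~ (exists c1 c2, conjugate_in_Ainf g c1 /\ conjugate_in_Ainf g c2 /\
                        w =1 c1 \o c2)).
Proof. split; [exact: part1 | exact: part2]. Qed.
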